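(* For each $2p\in\{24, 28, 32, 36, 44, 48, 52, 54\}$ there exists a cyclic DCA$(4,2p+1;2p)$ satisfying P1 and P2.
   Context: A difference covering array DCA$(k,\eta;n)$ over $\mathbb{Z}_n$ (a cyclic DCA) is an $\eta\times k$ matrix $Q=[q(i,j)]$ with entries in $\mathbb{Z}_n$ such that for every pair of distinct columns $j,j'$ the multiset $\{q(i,j)-q(i,j') : 0\le i\le \eta-1\}$ contains every element of $\mathbb{Z}_n$ at least once. A DCA$(k,n+1;n)$ is taken in normalized form: all entries of its last row (row $n$) and last column (column $k-1$) equal $0$. It satisfies P1 if $0$ occurs at least twice in every column, and P2 if for all distinct columns $j,j'$ with $j\neq k-1\neq j'$, the set $\{q(i,j)-q(i,j') : 0\le i\le n-1\}$ equals $\mathbb{Z}_n\setminus\{0\}$. *)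

(* Defs.v *)
From mathcomp Require Import all_boot all_algebra.
Set Implicit Arguments. Unset Strict Implicit. Unset Printing Implicit Defensive.

(* Entries in Z_n are represented by 'I_n; subtraction in Z_n is
   (a + n - b) %% n. Rows are indexed by 'I_eta, columns by 'I_k. *)
Definition zdiff (n : nat) (a b : 'I_n) : nat := (a + n - b) %% n.

Definition is_DCA (n k eta : nat) (Q : 'M['I_n]_(eta, k)) : Prop :=
  forall j j' : 'I_k, j != j' ->
    forall d : 'I_n, exists i : 'I_eta, zdiff (Q i j) (Q i j') = d.

Definition normalized (n k : nat) (Q : 'M['I_n]_(n.+1, k)) : Prop :=
  (forall j : 'I_k, nat_of_ord (Q ord_max j) = 0) /\
  (forall (i : 'I_n.+1) (j : 'I_k), nat_of_ord j = k.-1 -> nat_of_ord (Q i j) = 0).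

Definition P1 (n k : nat) (Q : 'M['I_n]_(n.+1, k)) : Prop :=
  forall j : 'I_k, 2 <= #|[set i : 'I_n.+1 | nat_of_ord (Q i j) == 0]|.

Definition P2 (n k : nat) (Q : 'M['I_n]_(n.+1, k)) : Prop :=
  forall j j' : 'I_k, j != j' -> nat_of_ord j != k.-1 -> nat_of_ord j' != k.-1 ->
    forall d : nat,
      (exists i : 'I_n.+1, i < n /\ zdiff (Q i j) (Q i j') = d) <-> (0 < d < n).

(* Main.v *)
Require Import Defs.
From mathcomp Require Import all_boot all_algebra.
Set Implicit Arguments. Unset Strict Implicit. Unset Printing Implicit Defensive.

Definition zd (n a b : nat) : nat := (a + n - b) %% n.

Definition checkb (n : nat) (f : nat -> nat -> nat) : bool :=
  let g i j := f i j %% n in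
  [&& all (fun j => all (fun j' => (j == j') || all (fun d => has (fun i => zd n (g i j) (g i j') == d) (iota 0 n.+1)) (iota 0 n)) (iota 0 4)) (iota 0 4),
      all (fun j => g n j == 0) (iota 0 4),
      all (fun i => g i 3 == 0) (iota 0 n.+1),
      all (fun j => has (fun i => g i j == 0) (iota 0 n)) (iota 0 4) &
      all (fun j => all (fun j' => (j == j') || (all (fun i => 0 < zd n (g i j) (g i j')) (iota 0 n) && all (fun d => has (fun i => zd n (g i j) (g i j') == d) (iota 0 n)) (iota 1 n.-1))) (iota 0 3)) (iota 0 3)].

Lemma allI (P : pred nat) m k : all P (iota 0 m) -> k < m -> P k.
Proof. by move=> /allP H Hk; apply: H; rewrite mem_iota. Qed.

Lemma build n f : 0 < n -> checkb n f ->
  exists Q : 'M['I_n]_(n.+1, 4), is_DCA Q /\ normalized Q /\ P1 Q /\ P2 Q.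
Proof.
move=> Hn /and5P [H1 H2 H3 H4 H5].
pose Q : 'M['I_n]_(n.+1, 4) := (\matrix_(i, j) (Ordinal (ltn_pmod (f i j) Hn) : 'I_n))%R.
have QE : forall i j, nat_of_ord (Q i j) = f i j %% n by move=> i j; rewrite mxE.
have ZE : forall i j j', zdiff (Q i j) (Q i j') = zd n (f i j %% n) (f i j' %% n).
  by move=> i j j'; rewrite /zdiff /zd !QE.
exists Q; split; [|split; [|split]].
- move=> j j' Hjj' d.
  have := allI H1 (ltn_ord j) => /(allI) /(_ (ltn_ord j')).
  have -> : (nat_of_ord j == nat_of_ord j') = false by apply/negbTE.
  rewrite orFb => /(allI) /(_ (ltn_ord d)) /hasP [i].
  rewrite mem_iota add0n /= => Hi /eqP Hz.
  by exists (Ordinal Hi); rewrite ZE.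
- split.
  + move=> j; rewrite QE; exact/eqP/(allI H2 (ltn_ord j)).
  + move=> i j Hj; rewrite QE.
    have -> : nat_of_ord j = 3 by rewrite Hj.
    exact/eqP/(allI H3 (ltn_ord i)).
- move=> j; have /hasP [i] := allI H4 (ltn_ord j).
  rewrite mem_iota add0n /= => Hi Hz.
  have Hi' : i < n.+1 by apply: ltnW.
  pose i0 : 'I_n.+1 := Ordinal Hi'.
  have Hne : i0 != ord_max by rewrite -val_eqE /= neq_ltn Hi.
  apply: leq_trans (_ : #|[set i0; ord_max]| <= _).
    by rewrite cards2 Hne.
  apply: subset_leq_card; apply/subsetP => x; rewrite !inE => /orP [] /eqP ->;
    rewrite QE //. exact: (allI H2 (ltn_ord j)).
- move=> j j' Hjj' Hj Hj' d.
  have Hj3 : j < 3 by move: Hj (ltn_ord j); rewrite /=; case: (nat_of_ord j) => [|[|[|[|]]]].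
  have Hj3' : j' < 3 by move: Hj' (ltn_ord j'); rewrite /=; case: (nat_of_ord j') => [|[|[|[|]]]].
  have := allI H5 Hj3 => /(allI) /(_ Hj3').
  have -> : (nat_of_ord j == nat_of_ord j') = false by apply/negbTE.
  rewrite orFb => /andP [Hp Hc]; split.
  + move=> [i [Hi <-]]; rewrite ZE (allI Hp Hi) /=; exact: ltn_pmod.
  + move=> /andP [d1 d2].
    have Hd : d \in iota 1 n.-1 by rewrite mem_iota d1 add1n prednK.
    have /hasP [i] := (allP Hc) d Hd.
    rewrite mem_iota add0n /= => Hi /eqP Hz.
    have Hi' : i < n.+1 by apply: ltnW.
    by exists (Ordinal Hi'); rewrite ZE.
Qed.

Definition tbl24 : seq (seq nat) := [:: [:: 0; 9; 16; 0]; [:: 1; 7; 5; 0]; [:: 2; 12; 17; 0]; [:: 3; 19; 11; 0]; [:: 4; 15; 23; 0]; [:: 5; 13; 10; 0]; [:: 6; 3; 15; 0]; [:: 7; 20; 19; 0]; [:: 8; 10; 1; 0]; [:: 9; 4; 21; 0]; [:: 10; 0; 9; 0]; [:: 11; 23; 13; 0]; [:: 12; 11; 6; 0]; [:: 13; 6; 0; 0]; [:: 14; 8; 12; 0]; [:: 15; 18; 4; 0]; [:: 16; 21; 22; 0]; [:: 17; 5; 7; 0]; [:: 18; 1; 14; 0]; [:: 19; 17; 20; 0]; [:: 20; 16; 3; 0]; [:: 21; 22; 18; 0]; [:: 22; 2; 8; 0]; [:: 23; 14; 2; 0]].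
Lemma chk24 : checkb 24 (fun i j => nth 0 (nth [::] tbl24 i) j).
Proof. by vm_compute. Qed.
Lemma ex24 : exists Q : 'M['I_24]_(24.+1, 4), is_DCA Q /\ normalized Q /\ P1 Q /\ P2 Q.
Proof. exact: (build (isT : 0 < 24) chk24). Qed.

Definition tbl28 : seq (seq nat) := [:: [:: 0; 12; 7; 0]; [:: 1; 16; 18; 0]; [:: 2; 19; 16; 0]; [:: 3; 5; 19; 0]; [:: 4; 0; 10; 0]; [:: 5; 23; 14; 0]; [:: 6; 20; 27; 0]; [:: 7; 13; 22; 0]; [:: 8; 21; 6; 0]; [:: 9; 4; 5; 0]; [:: 10; 26; 12; 0]; [:: 11; 8; 24; 0]; [:: 12; 6; 4; 0]; [:: 13; 17; 21; 0]; [:: 14; 15; 11; 0]; [:: 15; 18; 1; 0]; [:: 16; 27; 20; 0]; [:: 17; 10; 0; 0]; [:: 18; 25; 9; 0]; [:: 19; 11; 3; 0]; [:: 20; 1; 23; 0]; [:: 21; 7; 15; 0]; [:: 22; 2; 17; 0]; [:: 23; 14; 13; 0]; [:: 24; 22; 25; 0]; [:: 25; 24; 2; 0]; [:: 26; 3; 8; 0]; [:: 27; 9; 26; 0]].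
Lemma chk28 : checkb 28 (fun i j => nth 0 (nth [::] tbl28 i) j).
Proof. by vm_compute. Qed.
Lemma ex28 : exists Q : 'M['I_28]_(28.+1, 4), is_DCA Q /\ normalized Q /\ P1 Q /\ P2 Q.
Proof. exact: (build (isT : 0 < 28) chk28). Qed.

Definition tbl32 : seq (seq nat) := [:: [:: 0; 18; 11; 0]; [:: 1; 5; 7; 0]; [:: 2; 28; 20; 0]; [:: 3; 20; 16; 0]; [:: 4; 29; 13; 0]; [:: 5; 24; 21; 0]; [:: 6; 21; 25; 0]; [:: 7; 4; 12; 0]; [:: 8; 7; 1; 0]; [:: 9; 1; 24; 0]; [:: 10; 19; 6; 0]; [:: 11; 13; 28; 0]; [:: 12; 23; 4; 0]; [:: 13; 2; 8; 0]; [:: 14; 26; 3; 0]; [:: 15; 10; 22; 0]; [:: 16; 0; 14; 0]; [:: 17; 22; 27; 0]; [:: 18; 16; 0; 0]; [:: 19; 25; 23; 0]; [:: 20; 11; 10; 0]; [:: 21; 17; 18; 0]; [:: 22; 12; 2; 0]; [:: 23; 31; 17; 0]; [:: 24; 27; 15; 0]; [:: 25; 6; 9; 0]; [:: 26; 8; 29; 0]; [:: 27; 15; 26; 0]; [:: 28; 3; 30; 0]; [:: 29; 30; 5; 0]; [:: 30; 14; 31; 0]; [:: 31; 9; 19; 0]].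
Lemma chk32 : checkb 32 (fun i j => nth 0 (nth [::] tbl32 i) j).
Proof. by vm_compute. Qed.
Lemma ex32 : exists Q : 'M['I_32]_(32.+1, 4), is_DCA Q /\ normalized Q /\ P1 Q /\ P2 Q.
Proof. exact: (build (isT : 0 < 32) chk32). Qed.

Definition tbl36 : seq (seq nat) := [:: [:: 0; 34; 19; 0]; [:: 1; 2; 21; 0]; [:: 2; 18; 17; 0]; [:: 3; 27; 16; 0]; [:: 4; 19; 12; 0]; [:: 5; 17; 30; 0]; [:: 6; 16; 34; 0]; [:: 7; 30; 10; 0]; [:: 8; 10; 5; 0]; [:: 9; 22; 27; 0]; [:: 10; 14; 32; 0]; [:: 11; 29; 23; 0]; [:: 12; 15; 13; 0]; [:: 13; 4; 0; 0]; [:: 14; 6; 20; 0]; [:: 15; 5; 9; 0]; [:: 16; 25; 26; 0]; [:: 17; 1; 8; 0]; [:: 18; 24; 3; 0]; [:: 19; 13; 33; 0]; [:: 20; 3; 29; 0]; [:: 21; 32; 2; 0]; [:: 22; 8; 18; 0]; [:: 23; 20; 11; 0]; [:: 24; 9; 6; 0]; [:: 25; 7; 15; 0]; [:: 26; 33; 25; 0]; [:: 27; 35; 22; 0]; [:: 28; 23; 35; 0]; [:: 29; 28; 31; 0]; [:: 30; 11; 28; 0]; [:: 31; 0; 24; 0]; [:: 32; 21; 7; 0]; [:: 33; 26; 1; 0]; [:: 34; 12; 14; 0]; [:: 35; 31; 4; 0]].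
Lemma chk36 : checkb 36 (fun i j => nth 0 (nth [::] tbl36 i) j).
Proof. by vm_compute. Qed.
Lemma ex36 : exists Q : 'M['I_36]_(36.+1, 4), is_DCA Q /\ normalized Q /\ P1 Q /\ P2 Q.
Proof. exact: (build (isT : 0 < 36) chk36). Qed.

Definition tbl44 : seq (seq nat) := [:: [:: 0; 23; 22; 0]; [:: 1; 39; 37; 0]; [:: 2; 35; 13; 0]; [:: 3; 19; 32; 0]; [:: 4; 15; 19; 0]; [:: 5; 11; 14; 0]; [:: 6; 27; 1; 0]; [:: 7; 33; 20; 0]; [:: 8; 32; 43; 0]; [:: 9; 12; 29; 0]; [:: 10; 17; 3; 0]; [:: 11; 26; 41; 0]; [:: 12; 34; 16; 0]; [:: 13; 21; 0; 0]; [:: 14; 42; 10; 0]; [:: 15; 24; 12; 0]; [:: 16; 13; 21; 0]; [:: 17; 8; 24; 0]; [:: 18; 6; 28; 0]; [:: 19; 2; 40; 0]; [:: 20; 1; 42; 0]; [:: 21; 7; 2; 0]; [:: 22; 18; 38; 0]; [:: 23; 36; 26; 0]; [:: 24; 43; 6; 0]; [:: 25; 30; 23; 0]; [:: 26; 28; 34; 0]; [:: 27; 5; 7; 0]; [:: 28; 20; 11; 0]; [:: 29; 14; 35; 0]; [:: 30; 25; 5; 0]; [:: 31; 41; 25; 0]; [:: 32; 22; 31; 0]; [:: 33; 3; 17; 0]; [:: 34; 38; 4; 0]; [:: 35; 9; 36; 0]; [:: 36; 4; 9; 0]; [:: 37; 10; 39; 0]; [:: 38; 31; 27; 0]; [::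 39; 37; 18; 0]; [:: 40; 16; 8; 0]; [:: 41; 40; 15; 0]; [:: 42; 29; 30; 0]; [:: 43; 0; 33; 0]].
Lemma chk44 : checkb 44 (fun i j => nth 0 (nth [::] tbl44 i) j).
Proof. by vm_compute. Qed.
Lemma ex44 : exists Q : 'M['I_44]_(44.+1, 4), is_DCA Q /\ normalized Q /\ P1 Q /\ P2 Q.
Proof. exact: (build (isT : 0 < 44) chk44). Qed.

Definition tbl48 : seq (seq nat) := [:: [:: 0; 16; 35; 0]; [:: 16; 35; 0; 0]; [:: 35; 0; 16; 0]; [:: 1; 38; 26; 0]; [:: 38; 26; 1; 0]; [:: 26; 1; 38; 0]; [:: 2; 41; 17; 0]; [:: 41; 17; 2; 0]; [:: 17; 2; 41; 0]; [:: 8; 7; 32; 0]; [:: 7; 32; 8; 0]; [:: 32; 8; 7; 0]; [:: 4; 39; 9; 0]; [:: 39; 9; 4; 0]; [:: 9; 4; 39; 0]; [:: 10; 13; 47; 0]; [:: 13; 47; 10; 0]; [:: 47; 10; 13; 0]; [:: 6; 18; 45; 0]; [:: 18; 45; 6; 0]; [:: 45; 6; 18; 0]; [:: 11; 33; 27; 0]; [:: 33; 27; 11; 0]; [:: 27; 11; 33; 0]; [:: 19; 40; 36; 0]; [:: 40; 36; 19; 0]; [:: 36; 19; 40; 0]; [:: 5; 22; 3; 0]; [:: 22; 3; 5; 0]; [:: 3; 5; 22; 0]; [:: 12; 20; 46; 0]; [:: 20; 46; 12; 0]; [:: 46; 12; 20; 0]; [:: 15; 21; 25; 0]; [:: 21;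 25; 15; 0]; [:: 25; 15; 21; 0]; [:: 28; 43; 23; 0]; [:: 43; 23; 28; 0]; [:: 23; 28; 43; 0]; [:: 14; 44; 42; 0]; [:: 44; 42; 14; 0]; [:: 42; 14; 44; 0]; [:: 24; 34; 31; 0]; [:: 34; 31; 24; 0]; [:: 31; 24; 34; 0]; [:: 29; 30; 37; 0]; [:: 30; 37; 29; 0]; [:: 37; 29; 30; 0]].
Lemma chk48 : checkb 48 (fun i j => nth 0 (nth [::] tbl48 i) j).
Proof. by vm_compute. Qed.
Lemma ex48 : exists Q : 'M['I_48]_(48.+1, 4), is_DCA Q /\ normalized Q /\ P1 Q /\ P2 Q.
Proof. exact: (build (isT : 0 < 48) chk48). Qed.

Definition tbl52 : seq (seq nat) := [:: [:: 0; 34; 47; 0]; [:: 1; 26; 7; 0]; [:: 2; 32; 5; 0]; [:: 3; 49; 32; 0]; [:: 4; 15; 41; 0]; [:: 5; 19; 37; 0]; [:: 6; 25; 34; 0]; [:: 7; 3; 25; 0]; [:: 8; 1; 22; 0]; [:: 9; 29; 43; 0]; [:: 10; 47; 1; 0]; [:: 11; 42; 49; 0]; [:: 12; 35; 31; 0]; [:: 13; 21; 15; 0]; [:: 14; 40; 18; 0]; [:: 15; 6; 30; 0]; [:: 16; 17; 3; 0]; [:: 17; 16; 11; 0]; [:: 18; 33; 38; 0]; [:: 19; 43; 2; 0]; [:: 20; 24; 16; 0]; [:: 21; 31; 13; 0]; [:: 22; 28; 27; 0]; [:: 23; 11; 12; 0]; [:: 24; 22; 48; 0]; [:: 25; 5;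 33; 0]; [:: 26; 12; 10; 0]; [:: 27; 44; 0; 0]; [:: 28; 41; 45; 0]; [:: 29; 10; 39; 0]; [:: 30; 14; 46; 0]; [:: 31; 0; 42; 0]; [:: 32; 27; 44; 0]; [:: 33; 36; 21; 0]; [:: 34; 8; 24; 0]; [:: 35; 18; 28; 0]; [:: 36; 48; 35; 0]; [:: 37; 13; 6; 0]; [:: 38; 30; 9; 0]; [:: 39; 9; 36; 0]; [:: 40; 4; 19; 0]; [:: 41; 7; 50; 0]; [:: 42; 51; 40; 0]; [:: 43; 50; 17; 0]; [:: 44; 46; 14; 0]; [:: 45; 20; 23; 0]; [:: 46; 23; 20; 0]; [:: 47; 37; 8; 0]; [:: 48; 45; 29; 0]; [:: 49; 2; 4; 0]; [:: 50; 39; 51; 0]; [:: 51; 38; 26; 0]].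
Lemma chk52 : checkb 52 (fun i j => nth 0 (nth [::] tbl52 i) j).
Proof. by vm_compute. Qed.
Lemma ex52 : exists Q : 'M['I_52]_(52.+1, 4), is_DCA Q /\ normalized Q /\ P1 Q /\ P2 Q.
Proof. exact: (build (isT : 0 < 52) chk52). Qed.

Definition tbl54 : seq (seq nat) := [:: [:: 0; 34; 5; 0]; [:: 34; 5; 0; 0]; [:: 5; 0; 34; 0]; [:: 7; 44; 22; 0]; [:: 44; 22; 7; 0]; [:: 22; 7; 44; 0]; [:: 3; 1; 14; 0]; [:: 1; 14; 3; 0]; [:: 14; 3; 1; 0]; [:: 4; 18; 25; 0]; [:: 18; 25; 4; 0]; [:: 25; 4; 18; 0]; [:: 6; 24; 52; 0]; [:: 24; 52; 6; 0]; [:: 52; 6; 24; 0]; [:: 2; 29; 53; 0]; [:: 29; 53; 2; 0]; [:: 53; 2; 29; 0]; [:: 13; 35; 26; 0]; [:: 35; 26; 13; 0]; [:: 26; 13; 35; 0]; [:: 10; 19; 16; 0]; [:: 19; 16; 10; 0]; [:: 16; 10; 19; 0]; [:: 17; 46; 36; 0]; [:: 46; 36; 17; 0]; [:: 36; 17; 46; 0]; [:: 8; 20; 43; 0]; [:: 20; 43; 8; 0]; [:: 43; 8; 20; 0]; [:: 9; 39; 32; 0]; [:: 39; 32; 9; 0]; [:: 32; 9; 39; 0]; [:: 15; 21; 48; 0]; [:: 21; 48; 15; 0]; [:: 48; 15; 21; 0]; [:: 30; 50; 42; 0]; [:: 50; 42; 30; 0]; [:: 42; 30; 50; 0]; [::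 31; 41; 45; 0]; [:: 41; 45; 31; 0]; [:: 45; 31; 41; 0]; [:: 33; 38; 37; 0]; [:: 38; 37; 33; 0]; [:: 37; 33; 38; 0]; [:: 28; 12; 27; 0]; [:: 12; 27; 28; 0]; [:: 27; 28; 12; 0]; [:: 11; 47; 49; 0]; [:: 47; 49; 11; 0]; [:: 49; 11; 47; 0]; [:: 23; 40; 51; 0]; [:: 40; 51; 23; 0]; [:: 51; 23; 40; 0]].
Lemma chk54 : checkb 54 (fun i j => nth 0 (nth [::] tbl54 i) j).
Proof. by vm_compute. Qed.
Lemma ex54 : exists Q : 'M['I_54]_(54.+1, 4), is_DCA Q /\ normalized Q /\ P1 Q /\ P2 Q.
Proof. exact: (build (isT : 0 < 54) chk54). Qed.

Theorem mainTheorem16 :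
  forall n : nat, n \in [:: 24; 28; 32; 36; 44; 48; 52; 54] ->
    exists Q : 'M['I_n]_(n.+1, 4),
      is_DCA Q /\ normalized Q /\ P1 Q /\ P2 Q.
Proof.
move=> n H; rewrite !inE in H.
case/orP: H => [/eqP -> | H]; first exact: ex24.
case/orP: H => [/eqP -> | H]; first exact: ex28.
case/orP: H => [/eqP -> | H]; first exact: ex32.
case/orP: H => [/eqP -> | H]; first exact: ex36.
case/orP: H => [/eqP -> | H]; first exact: ex44.
case/orP: H => [/eqP -> | H]; first exact: ex48.
case/orP: H => [/eqP -> | H]; first exact: ex52.
move/eqP: H => ->; exact: ex54.
Qed.
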